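(* For any filtration $\mathcal{F}_{t-1}$, conditioned on the event $E^f(t)$, we have for all $x\in\mathcal{Q}$ $$\mathbb{P}\left(f_t(x)>\rho_mf(x)\mid\mathcal{F}_{t-1}\right)\ge p,\qquad p=\frac{1}{4e\sqrt{\pi}},$$ where $f_t$ is sampled from $\mathcal{GP}(\mu_{t-1}(\cdot),\nu_t^2\sigma^2_{t-1}(\cdot))$ given $\mathcal{F}_{t-1}$.
   Context: Setting. Let $\mathcal{Q}\subset\mathbb{R}^n$ be finite, $k$ a positive semidefinite kernel on $\mathcal{Q}$ with $k\le1$, and $f$ in the RKHS of $k$ with $\|f\|_k\le\mathcal{B}_f$. Queries $x_1,x_2,\ldots\in\mathcal{Q}$ are selected sequentially; feedback $y_t=f(x_t)+\epsilon_t$ with $R$-sub-Gaussian $\epsilon_t$ and $|y_t|\le\mathcal{B}_y$, observed after a random delay $d_t\in\{0,1,\ldots\}$ drawn from a distribution $\mathcal{D}$. For an integer $m\ge1$, $\rho_m=\mathbb{P}(d_s\le m)$, censored feedback $\tilde y_{s,t}=y_s\mathbb{1}\{d_s\le\min(m,t-s)\}$. With $\lambda>0$: $\mu_{t-1}(x)=\mathbf{k}_{t-1}(x)^\top(\mathbf{K}_{t-1}+\lambda I)^{-1}\tilde{\mathbf{y}}_{t-1}$, $\sigma^2_{t-1}(x,x')=k(x,x')-\mathbf{k}_{t-1}(x)^\top(\mathbf{K}_{t-1}+\lambda I)^{-1}\mathbf{k}_{t-1}(x')$, $\sigma^2_{t-1}(x)=\sigma^2_{t-1}(x,x)$, $\mathbf{k}_{t-1}(x)=(k(x,x_i))_{i\le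 t-1}$, $\mathbf{K}_{t-1}=(k(x_i,x_j))_{i,j\le t-1}$, $\tilde{\mathbf{y}}_{t-1}=(\tilde y_{s,t})_{s\le t-1}$. $\gamma_t=\max_A\frac12\log\det(I+\lambda^{-1}\mathbf{K}_A)$ over collections $A$ of $t$ points. For $\delta\in(0,1)$: $\beta_t=\mathcal{B}_f+(R+\mathcal{B}_y)\sqrt{2(\gamma_{t-1}+1+\log(4/\delta))}$, $\nu_t=\mathcal{B}_y\sum_{s=t-m}^{t-1}\sigma_{t-1}(x_s)+\beta_t$ (terms with $s<1$ omitted). $\mathcal{F}_{t-1}$ is the history of inputs and observations up to iteration $t-1$. $E^f(t)$ is the event that $|\mu_{t-1}(x)-\rho_mf(x)|\le\nu_t\sigma_{t-1}(x)$ for all $x\in\mathcal{Q}$. *)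

(* Defs.v *)
From HB Require Import structures.
From mathcomp Require Import all_boot all_order all_algebra.
From mathcomp Require Import all_classical all_reals all_analysis.
Set Implicit Arguments. Unset Strict Implicit. Unset Printing Implicit Defensive.
Import Order.TTheory GRing.Theory Num.Theory.
Import numFieldNormedType.Exports.
Local Open Scope classical_set_scope.
Local Open Scope ring_scope.

Section GPUCB_delayed.
Context {R : realType} {Q : finType}.

(* kernel k : Q -> Q -> R, regulariser lambda, past queries xs (x_s at index s, s >= 1) *)
Variables (k : Q -> Q -> R) (lambda : R) (xs : nat -> Q).

(* k_{t-1}(x) = (k(x, x_s))_{s = 1..t-1}, indexed by i : 'I_(t-1) <-> s = i+1 *)
Definition kvec (t : nat) (x : Q) : 'cV[R]_(t.-1) := \col_(i < t.-1) k x (xs i.+1).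

Definition Kmat (t : nat) : 'M[R]_(t.-1) :=
  \matrix_(i < t.-1, j < t.-1) k (xs i.+1) (xs j.+1).

(* censored feedback vector (y_s 1{d_s <= min(m, t-s)})_{s <= t-1} *)
Definition ytil (ys : nat -> R) (ds : nat -> nat) (m t : nat) : 'cV[R]_(t.-1) :=
  \col_(i < t.-1) (ys i.+1 * ((ds i.+1 <= minn m (t - i.+1))%N)%:R).

Definition post_mean (ys : nat -> R) (ds : nat -> nat) (m t : nat) (x : Q) : R :=
  ((kvec t x)^T *m invmx (Kmat t + lambda%:M) *m ytil ys ds m t) 0 0.

Definition post_cov (t : nat) (x x' : Q) : R :=
  k x x' - ((kvec t x)^T *m invmx (Kmat t + lambda%:M) *m kvec t x') 0 0.

Definition post_sd (t : nat) (x : Q) : R := Num.sqrt (post_cov t x x).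

Definition info_gain (j : nat) : R :=
  \big[Num.max/0]_(A : j.-tuple Q)
     (2^-1 * ln (\det (1%:M + lambda^-1 *: \matrix_(i < j, l < j) k (tnth A i) (tnth A l)))).

Definition beta_t (Bf Rn By delta : R) (t : nat) : R :=
  Bf + (Rn + By) * Num.sqrt (2 * (info_gain t.-1 + 1 + ln (4 / delta))).

Definition nu_t (Bf Rn By delta : R) (m t : nat) : R :=
  By * (\sum_(t - m <= s < t | (0 < s)%N) post_sd t (xs s)) + beta_t Bf Rn By delta t.

Definition Ef_event (f : Q -> R) (rho : R) (ys : nat -> R) (ds : nat -> nat)
    (Bf Rn By delta : R) (m t : nat) : Prop :=
  forall x : Q, `|post_mean ys ds m t x - rho * f x|
                  <= nu_t Bf Rn By delta m t * post_sd t x.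

End GPUCB_delayed.

(* rho_m = P(d <= m) for a delay distribution D on nat given by its pmf *)
Definition rho_of {R : realType} (D : nat -> R) (m : nat) : R := \sum_(i < m.+1) D i.

Definition is_pmf_nat {R : realType} (D : nat -> R) : Prop :=
  (forall i, 0 <= D i) /\ ((fun n => \sum_(i < n) D i) @ \oo --> (1 : R)).

Definition psd_kernel {R : realType} {Q : finType} (k : Q -> Q -> R) : Prop :=
  (forall x y, k x y = k y x) /\
  (forall c : Q -> R, 0 <= \sum_(x : Q) \sum_(y : Q) c x * c y * k x y).

(* f lies in the RKHS of k with ||f||_k <= B (finite domain: RKHS = span of k(., y),
   with ||sum_y a_y k(.,y)||^2 = a^T K a; the norm is the minimum over representations) *)
Definition rkhs_ball {R : realType} {Q : finType} (k : Q -> Q -> R) (f : Q -> R) (B : R) : Prop :=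
  exists a : Q -> R, (forall x, f x = \sum_(y : Q) a y * k x y) /\
     \sum_(x : Q) \sum_(y : Q) a x * a y * k x y <= B ^+ 2.

Definition is_gaussian_rv {R : realType} {d} {Om : measurableType d}
    (P : probability Om R) (X : Om -> R) (mu v : R) : Prop :=
  measurable_fun setT X /\
  forall A : set R, measurable A ->
    P (X @^-1` A) = if 0 < v then normal_prob mu (Num.sqrt v) A else \d_mu A.

(* F : Om -> (Q -> R) is a Gaussian process with mean m and covariance c on the
   finite index set Q: every linear combination is Gaussian with the right moments *)
Definition is_GP {R : realType} {d} {Om : measurableType d} {Q : finType}
    (P : probability Om R) (F : Om -> Q -> R) (mean : Q -> R) (cov : Q -> Q -> R) : Prop :=
  forall c : Q -> R,
    is_gaussian_rv P (fun w => \sum_(x : Q) c x * F w x)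
      (\sum_(x : Q) c x * mean x)
      (\sum_(x : Q) \sum_(y : Q) c x * c y * cov x y).

(* Main.v *)
Require Import Defs.
From HB Require Import structures.
From mathcomp Require Import all_boot all_order all_algebra.
From mathcomp Require Import all_classical all_reals all_analysis.
Import Order.TTheory GRing.Theory Num.Theory.
Import numFieldNormedType.Exports.
From mathcomp Require Import lra ring measurable_realfun.
Local Open Scope classical_set_scope.
Local Open Scope ring_scope.

Lemma const_ineq (R : realType) (s : R) : 0 < s ->
  1 / (4 * expR 1 * Num.sqrt pi) <= normal_peak s * expR (- (9/8)) * (s / 2).
Proof.
move=> s0.
have pi0 : 0 < pi :> R by exact: pi_gt0.
have sp0 : 0 < Num.sqrt (pi : R) by rewrite sqrtr_gt0.
have e0 : 0 < expR (1 : R) by exact: expR_gt0.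
rewrite /normal_peak.
have -> : s ^+ 2 * pi *+ 2 = s ^+ 2 * (pi * 2) by rewrite -mulr_natr -mulrA.
rewrite sqrtrM ?sqr_ge0 // sqrtr_sqr ger0_norm ?(ltW s0) // sqrtrM ?(ltW pi0) //.
set y := expR (- (1/8) : R).
have y0 : 0 < y by exact: expR_gt0.
have ey : expR (- (9/8)) = y / expR 1.
  rewrite /y -expRN -expRD; congr expR; lra.
have y2 : 3/4 <= y ^+ 2.
  rewrite /y -expRM_natr; apply: le_trans (expR_ge1Dx _); lra.
have s20 : 0 < Num.sqrt (2:R) by rewrite sqrtr_gt0.
have sq2 : Num.sqrt (2:R) ^+ 2 = 2 by rewrite sqr_sqrtr.
have s2 : Num.sqrt (2:R) <= 2 * y.
  rewrite expr2 in sq2 y2; nra.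
rewrite ey.
rewrite ler_pdivrMr; last by rewrite !mulr_gt0.
rewrite [X in _ <= X](_ : _ = 2 * y / Num.sqrt 2); last first.
  field; rewrite ?gt_eqF //.
rewrite ler_pdivlMr //; lra.
Qed.

Lemma normal_lb (R : realType) (mu s a : R) : 0 < s -> a <= mu + s ->
  ((1 / (4 * expR 1 * Num.sqrt pi))%:E <= normal_prob mu s `]a, +oo[)%E.
Proof.
move=> s0 amu.
set A := `]mu + s, mu + s * (3/2)].
have mA : measurable [set` A] := measurable_itv _.
have sub : [set` A] `<=` [set` `]a, +oo[].
  move=> z /=; rewrite !in_itv /= andbT => /andP[h _]; lra.
rewrite /normal_prob.
apply: (le_trans _ (@ge0_subset_integral _ _ _ lebesgue_measure _ _ mA (measurable_itv _) (fun x => (normal_pdf mu s x)%:E) _ _ sub)); last 2 first.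
- by apply/measurable_EFinP; apply: measurable_funTS; exact: measurable_normal_pdf.
- by move=> z _; rewrite lee_fin normal_pdf_ge0.
set c := normal_peak s * expR (- (9/8)).
have c0 : 0 <= c by rewrite mulr_ge0 ?normal_peak_ge0 ?expR_ge0.
apply: (@le_trans _ _ (\int[lebesgue_measure]_(x in [set` A]) (cst c%:E) x)%E); last first.
  apply: ge0_le_integral.
  - exact: mA.
  - by move=> z _; rewrite /= lee_fin.
  - exact: measurable_cst.
  - by apply/measurable_EFinP; apply: measurable_funTS; exact: measurable_normal_pdf.
  move=> z /=; rewrite in_itv /= => /andP[h1 h2].
  rewrite lee_fin normal_pdfE ?gt_eqF // /c ler_pM2l ?normal_peak_gt0 ?gt_eqF //.
  rewrite /normal_fun ler_expR mulNr lerN2 ler_pdivrMr; last first.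
    by rewrite pmulrn_rgt0 // exprn_gt0.
  rewrite -mulr_natr expr2; nra.
rewrite integral_cst //.
have hm : lebesgue_measure [set` A] = (s / 2)%:E.
  rewrite lebesgue_measure_itv /= lte_fin ifT; last lra.
  rewrite -EFinB; congr EFin; lra.
rewrite [X in (_ * X)%E](_ : _ = (s / 2)%:E); last exact: hm.
rewrite -EFinM lee_fin /c; exact: const_ineq.
Qed.


Lemma sum_ind (R : realType) (Q : finType) (x : Q) (F : Q -> R) :
  \sum_(y : Q) (y == x)%:R * F y = F x.
Proof.
rewrite (bigD1 x) //= eqxx mul1r big1 ?addr0 // => y /negbTE ->; by rewrite mul0r.
Qed.

Lemma sum_ind2 (R : realType) (Q : finType) (x : Q) (C : Q -> Q -> R) :
  \sum_(y : Q) \sum_(z : Q) (y == x)%:R * (z == x)%:R * C y z = C x x.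
Proof.
under eq_bigr => y _ do under eq_bigr => z _ do rewrite -mulrA.
under eq_bigr => y _ do rewrite -mulr_sumr sum_ind.
exact: sum_ind.
Qed.

Theorem lemma3 (R : realType) (Q : finType) (k : Q -> Q -> R) (f : Q -> R)
  (Bf By Rn lambda delta : R) (D : nat -> R) (m t : nat)
  (xs : nat -> Q) (ys : nat -> R) (ds : nat -> nat)
  (d : measure_display) (Om : measurableType d) (P : probability Om R)
  (ft : Om -> Q -> R) :
  psd_kernel k -> (forall x y, k x y <= 1) ->
  0 <= Bf -> rkhs_ball k f Bf ->
  0 < Rn -> 0 <= By -> (forall s, `|ys s| <= By) ->
  is_pmf_nat D -> (1 <= m)%N -> 0 < lambda -> 0 < delta < 1 -> (1 <= t)%N ->
  (* f_t | F_{t-1} ~ GP(mu_{t-1}, nu_t^2 sigma^2_{t-1}) *)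
  is_GP P ft (post_mean k lambda xs ys ds m t)
    (fun x x' => nu_t k lambda xs Bf Rn By delta m t ^+ 2 * post_cov k lambda xs t x x') ->
  (* conditioned on E^f(t) *)
  Ef_event k lambda xs f (rho_of D m) ys ds Bf Rn By delta m t ->
  forall x : Q, 0 < post_sd k lambda xs t x ->
    ((1 / (4 * expR 1 * Num.sqrt pi))%:E
       <= P [set w | (rho_of D m * f x < ft w x)%R])%E.
Proof.
move=> psd k1 Bf0 rk Rn0 By0 ysb pmf m1 lam0 /andP[d0 d1] t1 GP Ef x sd0.
set mu := post_mean k lambda xs ys ds m t x.
set cv := post_cov k lambda xs t x x.
set nu := nu_t k lambda xs Bf Rn By delta m t.
have ig0 : 0 <= info_gain k lambda t.-1.
  rewrite /info_gain; elim/big_rec: _ => // i z _ hz.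
  by rewrite le_max hz orbT.
have ln0 : 0 < ln (4 / delta).
  apply: ln_gt0; rewrite ltr_pdivlMr //; clear -d1; lra.
have nu0 : 0 < nu.
  rewrite /nu /nu_t; apply: ltr_wpDl.
    apply: mulr_ge0 => //; apply: sumr_ge0 => i _; exact: sqrtr_ge0.
  rewrite /beta_t; apply: ltr_wpDl => //; apply: mulr_gt0; first by clear -Rn0 By0; lra.
  rewrite sqrtr_gt0; clear -ig0 ln0; lra.
have cv0 : 0 < cv by move: sd0; rewrite /post_sd sqrtr_gt0.
have G := GP (fun y => (y == x)%:R).
case: G => _ HX.
have := HX [set` `]rho_of D m * f x, +oo[] (measurable_itv _).
have -> : (fun w => \sum_(y : Q) (y == x)%:R * ft w y) @^-1` [set` `]rho_of D m * f x, +oo[]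
   = [set w | rho_of D m * f x < ft w x].
  by apply/seteqP; split => w /=; rewrite in_itv /= andbT sum_ind.
rewrite sum_ind sum_ind2 ifT; last by rewrite mulr_gt0 ?exprn_gt0.
rewrite sqrtrM ?sqr_ge0 // sqrtr_sqr ger0_norm ?(ltW nu0) // => ->.
apply: normal_lb; first by rewrite mulr_gt0.
have := Ef x; rewrite -/mu -/nu /post_sd -/cv => /ler_normlP [h1 h2]; clear -h1; lra.
Qed.
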